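(* In the setting below, for every symmetry $g$ of $X$ there is $\tilde g\in\mathrm{Aut}(N)$ with $\tilde g(\iota(p))=\iota(g_*p)$ for all $p\in P$; every such $\tilde g$ permutes the twelve sublattices $A_{2,j}=\mathrm{span}_{\mathbb Z}\{\tilde E_j^{(1)},\tilde E_j^{(2)}\}$, and the induced permutation $\Theta(g)\in S_{12}$ depends only on $g$. The map $\Theta$ is an injective group homomorphism from the symmetry group of $X$ into the Mathieu group $M_{12}$ (the group of permutations of the twelve $A_{2,j}$ induced by $\mathrm{Aut}(N)$), and its image is generated by $\Theta(\alpha^1)=(1,4,3)(2,9,7)(5,8,6)$, $\Theta(\alpha^2)=(1,9,8)(2,5,3)(4,7,6)$, $\Theta(\beta)=(1,9,2,3)(4,8,7,5)$.
   Context: $\xi=e^{2\pi i/3}$, $c=(\xi+2)/3$, $T=\mathbb C^2/L$ with $L$ generated by $(1,0),(\xi,0),(0,1),(0,\xi)$, $\mathbb Z_3$ acting via $(z_1,z_2)\mapsto(\xi z_1,\xi^{-1}z_2)$, $X$ the minimal resolution of $T/\mathbb Z_3$. A symmetry of $X$ is a biholomorphic automorphism preserving the holomorphic volume form induced by $dz_1\wedge dz_2$ and the Kähler class induced by the Euclidean metric on $T$; the symmetry group is generated by the automorphisms $\alpha^1,\alpha^2,\beta$ induced by $(z_1,z_2)\mapsto(z_1+c,z_2)$, $(z_1,z_2)\mapsto(z_1,z_2+c)$, $(z_1,z_2)\mapsto(-z_2,z_1)$; $g_*$ is the induced action on $H^2(X,\mathbb Z)$. $E_t^{(1)},E_t^{(2)}$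 ($t\in\mathbb F_3^2$) are the Poincaré duals of the two exceptional $(-2)$-curves over the fixed point $[(t_1c,t_2c)]$, labelled compatibly with translations; $P=(R\otimes\mathbb Q)\cap H^2(X,\mathbb Z)$ with $R$ their span. $N$ is the $\mathbb Z$-span of vectors $\tilde E_j^{(\ell)}$ ($j\le12$, $\ell=1,2$; Gram $2$ on the diagonal, $-1$ between $\tilde E_j^{(1)},\tilde E_j^{(2)}$, $0$ otherwise) and $w_i=\tfrac13\sum_j a_{ij}(\tilde E_j^{(1)}+2\tilde E_j^{(2)})$, rows $(a_{ij})_j$: $(0,1,1,1,1,1,1,0,0,0,0,0)$, $(-1,0,1,-1,-1,1,0,1,0,0,0,0)$, $(-1,1,0,1,-1,-1,0,0,1,0,0,0)$, $(-1,-1,1,0,1,-1,0,0,0,1,0,0)$, $(-1,-1,-1,1,0,1,0,0,0,0,1,0)$, $(-1,1,-1,-1,1,0,0,0,0,0,0,1)$ (the Niemeier lattice of type $A_2^{12}$). $\iota\colon P(-1)\hookrightarrow N$ is the $\mathbb Q$-linear map $E^{(\ell)}_{(0,0)}\mapsto\tilde E_6^{(\ell)}$, $E^{(\ell)}_{(0,1)}\mapsto\tilde E_4^{(\ell)}$, $E^{(\ell)}_{(0,2)}\mapsto\tilde E_7^{(\ell)}$, $E^{(\ell)}_{(1,0)}\mapsto-\tilde E_5^{(\ell)}$, $E^{(\ell)}_{(1,1)}\mapsto-\tilde E_3^{(\ell)}$, $E^{(\ell)}_{(1,2)}\mapsto-\tilde E_2^{(\ell)}$, $E^{(\ell)}_{(2,0)}\mapsto\tilde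 E_8^{(\ell)}$, $E^{(\ell)}_{(2,1)}\mapsto\tilde E_1^{(\ell)}$, $E^{(\ell)}_{(2,2)}\mapsto\tilde E_9^{(\ell)}$. The Mathieu group $M_{12}$ is realized as the quotient of $\mathrm{Aut}(N)$ by the normal subgroup generated by the Weyl group $(S_3)^{12}$ and $-\mathrm{id}$, acting by permutations of $\{1,\dots,12\}$ (indices of the $A_{2,j}$). *)

(* Defs.v *)
From mathcomp Require Import all_boot all_order all_fingroup all_algebra.
Set Implicit Arguments. Unset Strict Implicit. Unset Printing Implicit Defensive.
Import GRing.Theory Num.Theory.
Local Open Scope ring_scope.

Definition apply_cycle (c : seq nat) (x : nat) : nat :=
  if x \in c then nth 0%N c ((index x c).+1 %% size c) else x.
Definition cyc (cs : seq (seq nat)) (x : nat) : nat := foldr apply_cycle x cs.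

(* coordinate vectors: index (j, l) with j : 'I_12 (j = paper's j - 1),
   l : 'I_2 (l = paper's ell - 1) *)
Definition Vec := 'rV[rat]_(12 * 2).
Definition Et (j : 'I_12) (l : 'I_2) : Vec := delta_mx 0 (mxvec_index j l).
Definition Et1 (j : nat) (l : 'I_2) : Vec := Et (inord j.-1) l.

Definition GramN : 'M[rat]_(12 * 2) :=
  \sum_(j < 12) \sum_(l < 2) \sum_(l' < 2)
     (if l == l' then 2%:R else -1) *: delta_mx (mxvec_index j l) (mxvec_index j l').

Definition bN (u v : Vec) : rat := (u *m GramN *m v^T) 0 0.

Definition glue_rows : seq (seq int) :=
  [:: [:: 0; 1; 1; 1; 1; 1; 1; 0; 0; 0; 0; 0];
      [:: -1; 0; 1; -1; -1; 1; 0; 1; 0; 0; 0; 0];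
      [:: -1; 1; 0; 1; -1; -1; 0; 0; 1; 0; 0; 0];
      [:: -1; -1; 1; 0; 1; -1; 0; 0; 0; 1; 0; 0];
      [:: -1; -1; -1; 1; 0; 1; 0; 0; 0; 0; 1; 0];
      [:: -1; 1; -1; -1; 1; 0; 0; 0; 0; 0; 0; 1]]%R.

Definition wvec (row : seq int) : Vec :=
  3%:R^-1 *: \sum_(j < 12) (nth 0 row j)%:~R *: (Et j 0 + 2%:R *: Et j 1).

Definition genN : seq Vec :=
  [seq Et jl.1 jl.2 | jl : 'I_12 * 'I_2] ++ map wvec glue_rows.

Definition inN (v : Vec) : Prop := inIntSpan (in_tuple genN) v.

(* Aut(N): rational linear maps (acting on row vectors, v |-> v *m M)
   preserving the bilinear form and mapping N bijectively onto N *)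
Definition AutN (M : 'M[rat]_(12 * 2)) : Prop :=
  (forall u v : Vec, bN (u *m M) (v *m M) = bN u v) /\
  (forall v, inN v -> inN (v *m M)) /\
  (forall v, inN v -> exists u, inN u /\ u *m M = v).

Definition inA2 (j : 'I_12) (v : Vec) : Prop :=
  inIntSpan (in_tuple [:: Et j 0; Et j 1]) v.

Definition inducesPerm (M : 'M[rat]_(12 * 2)) (s : {perm 'I_12}) : Prop :=
  forall j v, inA2 (s j) v <-> exists u, inA2 j u /\ v = u *m M.

Definition inM12 (s : {perm 'I_12}) : Prop :=
  exists M, AutN M /\ inducesPerm M s.

(* ---------- Exceptional curves E_t^(l), t in F_3^2 ---------- *)
Definition Curve := ('I_3 * 'I_3 * 'I_2)%type.

Definition iota_tab : seq (seq nat) := [:: [:: 6; 4; 7]; [:: 5; 3; 2]; [:: 8; 1; 9]].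
Definition iotaE (x : Curve) : Vec :=
  let: (t1, t2, l) := x in
  (if val t1 == 1%N then -1 else 1) *: Et1 (nth 0%N (nth [::] iota_tab t1) t2) l.

(* ---------- Symmetries, via their permutation of exceptional curves ---------- *)
(* alpha^1: translation by (c,0): t |-> t + (1,0), labels preserved *)
Definition a1f (x : Curve) : Curve := let: (t1, t2, l) := x in (t1 + 1, t2, l).
(* alpha^2: translation by (0,c) *)
Definition a2f (x : Curve) : Curve := let: (t1, t2, l) := x in (t1, t2 + 1, l).
(* beta: (z1,z2) |-> (-z2,z1): t |-> (-t2, t1); since beta conjugates the
   Z_3-generator to its inverse, it swaps the two curves over a fixed point *)
Definition bf (x : Curve) : Curve := let: (t1, t2, l) := x in (- t2, t1, rev_ord l).

Lemma a1f_inj : injective a1f.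
Proof.
apply: (can_inj (g := fun x : Curve => let: (t1, t2, l) := x in (t1 - 1, t2, l))).
by move=> [[t1 t2] l] /=; rewrite addrK.
Qed.
Lemma a2f_inj : injective a2f.
Proof.
apply: (can_inj (g := fun x : Curve => let: (t1, t2, l) := x in (t1, t2 - 1, l))).
by move=> [[t1 t2] l] /=; rewrite addrK.
Qed.
Lemma bf_inj : injective bf.
Proof.
apply: (can_inj (g := fun x : Curve => let: (t1, t2, l) := x in (t2, - t1, rev_ord l))).
by move=> [[t1 t2] l] /=; rewrite opprK rev_ordK.
Qed.

Definition alpha1 : {perm Curve} := perm a1f_inj.
Definition alpha2 : {perm Curve} := perm a2f_inj.
Definition beta : {perm Curve} := perm bf_inj.

Definition SymX : {group {perm Curve}} := <<[set alpha1; alpha2; beta]>>%G.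

(* g~ in Aut(N) is compatible with g: g~(iota p) = iota (g_* p) for p in P;
   by Q-linearity this is equivalent to the condition on the basis E_t^(l)
   of R, and g_* E_x = E_{g x}. *)
Definition extends (M : 'M[rat]_(12 * 2)) (g : {perm Curve}) : Prop :=
  forall x : Curve, iotaE x *m M = iotaE (g x).

(* Main.v *)
Require Import Defs.
From mathcomp Require Import all_boot all_order all_fingroup all_algebra.
From mathcomp Require Import ring lra zify.
Import GRing.Theory Num.Theory.
Set Implicit Arguments. Unset Strict Implicit. Unset Printing Implicit Defensive.
Local Open Scope ring_scope.
Local Notation V := (matrix rat 1 (12 * 2)).
Local Notation Mx := (matrix rat (12 * 2) (12 * 2)).

Definition mko n k : 'I_n.+1 := Ordinal (ltn_pmod k (ltn0Sn n)).
Definition allI n (P : 'I_n.+1 -> bool) := all (fun k => P (mko n k)) (iota 0 n.+1).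
Lemma allIP n (P : 'I_n.+1 -> bool) : allI P -> forall j, P j.
Proof.
move=> /allP H j; have ->: j = mko n j by apply: val_inj; rewrite /= modn_small.
by apply: H; rewrite mem_iota /=.
Qed.

Definition c (v : V) (j : 'I_12) (l : 'I_2) : rat := v 0 (mxvec_index j l).

Lemma mxvec_index_eq (j j' : 'I_12) (l l' : 'I_2) :
  (mxvec_index j l == mxvec_index j' l') = (j == j') && (l == l').
Proof.
apply/eqP/andP => [/cast_ord_inj/enum_rank_inj [-> ->] //|[/eqP -> /eqP ->] //].
Qed.

Lemma vecP (u v : V) : (forall j l, c u j l = c v j l) -> u = v.
Proof. by move=> H; apply/rowP => k; case/mxvec_indexP: k => j l; apply: H. Qed.

Lemma cD (u v : V) j l : c (u + v) j l = c u j l + c v j l. Proof. by rewrite /c mxE. Qed.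
Lemma cN (u : V) j l : c (- u) j l = - c u j l. Proof. by rewrite /c mxE. Qed.
Lemma cB (u v : V) j l : c (u - v) j l = c u j l - c v j l. Proof. by rewrite cD cN. Qed.
Lemma cZ a (u : V) j l : c (a *: u) j l = a * c u j l. Proof. by rewrite /c mxE. Qed.
Lemma cMz (u : V) z j l : c (u *~ z) j l = c u j l *~ z.
Proof. by rewrite -scaler_int cZ mulrzl. Qed.
Lemma c0 j l : c 0 j l = 0. Proof. by rewrite /c mxE. Qed.
Lemma c_sum I (r : seq I) (P : pred I) (F : I -> V) j l :
  c (\sum_(i <- r | P i) F i) j l = \sum_(i <- r | P i) c (F i) j l.
Proof. by rewrite /c summxE. Qed.
Lemma cEt j l j' l' : c (Et j l) j' l' = ((j' == j) && (l' == l))%:R.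
Proof. by rewrite /c /Et mxE eqxx mxvec_index_eq. Qed.

Lemma sum_delta (I : finType) (F : I -> rat) i0 : \sum_i F i * (i0 == i)%:R = F i0.
Proof.
rewrite (bigD1 i0) //= eqxx mulr1 big1 ?addr0 // => i Hi.
by rewrite eq_sym (negbTE Hi) mulr0.
Qed.

Lemma sum_delta2 (F : 'I_12 -> 'I_2 -> rat) j' l' :
  \sum_j \sum_l F j l * ((j' == j) && (l' == l))%:R = F j' l'.
Proof.
rewrite (bigD1 j') //= [X in _ + X]big1 ?addr0 => [|j Hj]; last first.
  by apply: big1 => l _; rewrite eq_sym (negbTE Hj) mulr0.
under eq_bigr => l _ do rewrite eqxx andTb.
exact: sum_delta.
Qed.

Lemma vec_decomp (v : V) : v = \sum_j \sum_l c v j l *: Et j l.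
Proof.
apply: vecP => j' l'; rewrite c_sum.
under eq_bigr => j _ do rewrite c_sum; under eq_bigr => j _ do under eq_bigr => l _ do rewrite cZ cEt.
by rewrite sum_delta2.
Qed.

Definition gr (l l' : 'I_2) : rat := if l == l' then 2%:R else -1.

Lemma sum_idx (F : 'I_(12 * 2) -> rat) :
  \sum_k F k = \sum_j \sum_l F (mxvec_index j l).
Proof.
rewrite (reindex _ (curry_mxvec_bij 12 2)) /= pair_big /=.
by apply: eq_bigr => [[j l]].
Qed.

Lemma GramNE j l j' l' :
  GramN (mxvec_index j l) (mxvec_index j' l') = (j == j')%:R * gr l l'.
Proof.
rewrite /GramN summxE.
under eq_bigr => j1 _ do rewrite summxE; under eq_bigr => j1 _ do under eq_bigr => l1 _ do rewrite summxE.
under eq_bigr => j1 _ do under eq_bigr => l1 _ do under eq_bigr => l2 _ do rewrite !mxE !mxvec_index_eq.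
rewrite (bigD1 j) //= [X in _ + X]big1 => [|j1 Hj1]; last first.
  by apply: big1 => l1 _; apply: big1 => l2 _; rewrite [j == j1]eq_sym (negbTE Hj1) /= mulr0.
rewrite addr0 eqxx; case: (eqVneq j j') => [E|Hne]; first subst j'.
  rewrite (bigD1 l) //= [X in _ + X]big1 => [|l1 Hl1]; last first.
    by apply: big1 => l2 _; rewrite [l == l1]eq_sym (negbTE Hl1) /= mulr0.
  rewrite addr0 (bigD1 l') //= [X in _ + X]big1 => [|l2 Hl2]; last first.
    by rewrite [l' == l2]eq_sym (negbTE Hl2) /= andbF mulr0.
  by rewrite !eqxx addr0 /= mulr1 mul1r.
rewrite mul0r.
apply: big1 => l1 _; apply: big1 => l2 _. by rewrite andbF mulr0.
Qed.

Lemma bNE (u v : V) : bN u v = \sum_j \sum_l \sum_l' c u j l * gr l l' * c v j l'.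
Proof.
rewrite /bN !mxE sum_idx.
rewrite (eq_bigr (fun j' => \sum_l' (\sum_l c u j' l * gr l l') * c v j' l')); last first.
  move=> j' _; apply: eq_bigr => l' _; rewrite !mxE sum_idx; congr (_ * _).
  rewrite (bigD1 j') //= [X in _ + X]big1 ?addr0 => [|j Hj]; last first.
    by apply: big1 => l _; rewrite GramNE (negbTE Hj) mul0r mulr0.
  by apply: eq_bigr => l _; rewrite GramNE eqxx mul1r.
apply: eq_bigr => j _; under eq_bigr => l' _ do rewrite mulr_suml.
by rewrite exchange_big.
Qed.

Lemma ispan0 (W : zmodType) (m : nat) (s : m.-tuple W) : inIntSpan s 0.
Proof. by exists 0; rewrite big1 // => i _; rewrite ffunE mulr0z. Qed.
Lemma ispanD (W : zmodType) (m : nat) (s : m.-tuple W) u v : inIntSpan s u -> inIntSpan s v -> inIntSpan s (u + v).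
Proof.
move=> [a ->] [b ->]; exists (a + b); rewrite -big_split /=.
by apply: eq_bigr => i _; rewrite ffunE mulrzDr.
Qed.
Lemma ispanMz (W : zmodType) (m : nat) (s : m.-tuple W) v z : inIntSpan s v -> inIntSpan s (v *~ z).
Proof.
move=> [a ->]; exists [ffun i => a i * z]; rewrite mulrz_suml.
by apply: eq_bigr => i _; rewrite ffunE mulrzA.
Qed.
Lemma ispanN (W : zmodType) (m : nat) (s : m.-tuple W) v : inIntSpan s v -> inIntSpan s (- v).
Proof. by move=> H; rewrite -mulrN1z; apply: ispanMz. Qed.
Lemma ispanB (W : zmodType) (m : nat) (s : m.-tuple W) u v : inIntSpan s u -> inIntSpan s v -> inIntSpan s (u - v).
Proof. by move=> Hu Hv; apply: ispanD => //; apply: ispanN. Qed.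
Lemma ispan_sum (W : zmodType) (m : nat) (s : m.-tuple W) I (r : seq I) (P : pred I) (F : I -> W) :
  (forall i, P i -> inIntSpan s (F i)) -> inIntSpan s (\sum_(i <- r | P i) F i).
Proof.
move=> H; elim/big_rec: _ => [|i x Pi Hx]; first exact: ispan0.
by apply: ispanD => //; apply: H.
Qed.
Lemma ispan_mem (W : zmodType) (m : nat) (s : m.-tuple W) x : x \in s -> inIntSpan s x.
Proof.
move=> /(nthP 0) [i Hi <-].
have Hi' : (i < m)%N by rewrite size_tuple in Hi.
exists [ffun k : 'I_m => ((k : nat) == i)%:Z].
rewrite (bigD1 (Ordinal Hi')) //= ffunE eqxx mulr1z big1 ?addr0 // => k Hk.
rewrite ffunE; case: eqP => [E|_]; last by rewrite mulr0z.
by case/eqP: Hk; apply: val_inj.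
Qed.

Lemma inN0 : inN 0. Proof. exact: ispan0. Qed.
Lemma inND u v : inN u -> inN v -> inN (u + v). Proof. exact: ispanD. Qed.
Lemma inNMz v z : inN v -> inN (v *~ z). Proof. exact: ispanMz. Qed.
Lemma inNN v : inN v -> inN (- v). Proof. exact: ispanN. Qed.
Lemma inNB u v : inN u -> inN v -> inN (u - v). Proof. exact: ispanB. Qed.
Lemma inN_sum I (r : seq I) (P : pred I) (F : I -> Vec) :
  (forall i, P i -> inN (F i)) -> inN (\sum_(i <- r | P i) F i).
Proof. exact: ispan_sum. Qed.
Lemma inN_mem x : x \in genN -> inN x.
Proof. by move=> H; apply: ispan_mem. Qed.

Lemma inN_Et j l : inN (Et j l).
Proof.
apply: inN_mem; rewrite mem_cat; apply/orP; left.
by apply/mapP; exists (j, l) => //; rewrite mem_enum.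
Qed.
Lemma inN_w r : r \in glue_rows -> inN (wvec r).
Proof. by move=> H; apply: inN_mem; rewrite mem_cat map_f ?orbT. Qed.

Definition acoef (k j : 'I_12) : rat :=
  if (6 <= k)%N then (nth 0 (nth [::] glue_rows (k - 6)) j)%:~R else 0.
Lemma acoef_int k j : acoef k j \is a Num.int.
Proof. by rewrite /acoef; case: ifP => _; [apply: intr_int | apply: rpred0]. Qed.

Definition f1 (v : V) j := 3%:R * c v j 0.
Definition f2 (v : V) j := c v j 1 - 2%:R * c v j 0.
Definition f3 (v : V) j := c v j 0 - \sum_k acoef k j * c v k 0.
Definition crit (v : V) := forall j,
  [/\ f1 v j \is a Num.int, f2 v j \is a Num.int & f3 v j \is a Num.int].

Lemma cMz' (u : V) z j l : c (u *~ z) j l = c u j l * z%:~R.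
Proof. by rewrite cMz mulrzr. Qed.

Lemma critD u v : crit u -> crit v -> crit (u + v).
Proof.
move=> Hu Hv j; case: (Hu j) => h1 h2 h3; case: (Hv j) => g1 g2 g3.
split.
- by rewrite /f1 cD mulrDr rpredD.
- have -> : f2 (u + v) j = f2 u j + f2 v j.
    by rewrite /f2 !cD; ring.
  by rewrite rpredD.
- have -> : f3 (u + v) j = f3 u j + f3 v j.
    rewrite /f3 cD.
    under eq_bigr => k _ do rewrite cD mulrDr.
    rewrite big_split /=; ring.
  by rewrite rpredD.
Qed.

Lemma critMz v z : crit v -> crit (v *~ z).
Proof.
move=> Hv j; case: (Hv j) => h1 h2 h3.
have Z : (z%:~R : rat) \is a Num.int := intr_int _ z.
split.
- by rewrite /f1 cMz' mulrA rpredM.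
- have -> : f2 (v *~ z) j = f2 v j * z%:~R by rewrite /f2 !cMz'; ring.
  by rewrite rpredM.
- have -> : f3 (v *~ z) j = f3 v j * z%:~R.
    rewrite /f3 cMz' mulrBl mulr_suml.
    by under eq_bigr => k _ do rewrite cMz' mulrA.
  by rewrite rpredM.
Qed.

Lemma crit_int v : (forall j l, c v j l \is a Num.int) -> crit v.
Proof.
move=> H j; split.
- by rewrite /f1 rpredM ?H // rpred_nat.
- by rewrite /f2 rpredB ?H // rpredM ?H // rpred_nat.
- rewrite /f3 rpredB ?H //; apply: rpred_sum => k _.
  by rewrite rpredM ?H ?acoef_int.
Qed.

Lemma natr_and (a b : bool) : ((a && b)%:R : rat) = a%:R * b%:R.
Proof. by case: a; case: b; rewrite ?mulr1 ?mulr0. Qed.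

Definition wf (r : seq int) (j : 'I_12) (l : 'I_2) : rat :=
  3%:R^-1 * (nth 0 r j)%:~R * (if l == 0 then 1 else 2%:R).

Lemma I2_cases (l : 'I_2) : l = 0 \/ l = 1.
Proof. by case: l => -[|[|n]] Hl; [left|right|]; try apply: val_inj. Qed.

Lemma c_wvec r j l : c (wvec r) j l = wf r j l.
Proof.
rewrite /wvec /wf cZ c_sum -mulrA; congr (_ * _).
under eq_bigr => j' _ do rewrite cZ cD cZ !cEt !natr_and.
rewrite (bigD1 j) //= big1 ?addr0 => [|j' Hj]; last first.
  by rewrite [j == j']eq_sym (negbTE Hj) !mul0r mulr0 addr0 mulr0.
rewrite eqxx !mul1r; congr (_ * _).
by case: (I2_cases l) => ->.
Qed.

Definition fsum (F : 'I_12 -> rat) := foldr (fun k acc => F (mko 11 k) + acc) 0 (iota 0 12).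
Lemma fsumE F : \sum_(k < 12) F k = fsum F.
Proof.
rewrite (eq_bigr (fun k : 'I_12 => F (mko 11 k))); last first.
  by move=> k _; congr F; apply: val_inj; rewrite /= modn_small.
by rewrite -(big_mkord xpredT (fun k => F (mko 11 k))) unlock.
Qed.

Definition critf (f : 'I_12 -> 'I_2 -> rat) : bool :=
  allI (fun j => [&& 3%:R * f j 0 \is a Num.int, f j 1 - 2%:R * f j 0 \is a Num.int
    & f j 0 - fsum (fun k => acoef k j * f k 0) \is a Num.int]).

Lemma critfP v f : (forall j l, c v j l = f j l) -> critf f -> crit v.
Proof.
move=> Hf Hc j; rewrite /critf in Hc; have /and3P [h1 h2 h3] := allIP Hc j.
split; rewrite /f1 /f2 /f3 ?Hf //; under eq_bigr => k _ do rewrite Hf; by rewrite fsumE.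
Qed.

Lemma crit_glue : all (fun r => critf (wf r)) glue_rows.
Proof. by vm_compute. Qed.

Lemma crit_mem x : x \in genN -> crit x.
Proof.
rewrite mem_cat => /orP [/mapP [[j0 l0] _ ->] | /mapP [r Hr ->]].
  apply: crit_int => j l; rewrite cEt; exact: rpred_nat.
apply: (critfP (f := wf r)); first exact: c_wvec.
by move/allP: crit_glue; apply.
Qed.

Lemma inN_crit v : inN v -> crit v.
Proof.
move=> [a ->]; elim/big_rec: _ => [|i x _ Hx].
  by apply: crit_int => j l; rewrite c0 rpred0.
apply: critD => //; apply: critMz; apply: crit_mem.
by rewrite -[genN]/(val (in_tuple genN)) mem_nth // size_tuple.
Qed.

Lemma inN_intcoords (u : V) : (forall j l, c u j l \is a Num.int) -> inN u.
Proof.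
move=> H; rewrite [u]vec_decomp; apply: inN_sum => j _; apply: inN_sum => l _.
by rewrite -(floorK (H j l)) scaler_int; apply: inNMz; apply: inN_Et.
Qed.

Lemma crit_inN v : crit v -> inN v.
Proof.
move=> Hv.
pose z (k : 'I_12) : int := if (6 <= k)%N then Num.floor (3%:R * c v k 0) else 0.
pose W := \sum_(k < 12) wvec (nth [::] glue_rows (k - 6)) *~ z k.
have cW j l : c W j l = (if l == 0 then 1 else 2%:R) * \sum_k acoef k j * c v k 0.
  rewrite c_sum mulr_sumr; apply: eq_bigr => k _.
  rewrite cMz' c_wvec /wf /z /acoef.
  case: (ltnP 5 k) => Hk; last by rewrite !mulr0 mul0r mulr0.
  have [h1 _ _] := Hv k; rewrite (floorK h1) /f1; move: (_ %:~R) (if l == 0 then _ else _) (c v k 0) => a b x; by field.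
suff: inN ((v - W) + W) by rewrite subrK.
apply: inND; last first.
  by apply: inN_sum => k0 _; apply: inNMz; apply: inN_w; apply: mem_nth; have := ltn_ord k0; rewrite [size _]/=; lia.
apply: inN_intcoords => j1 l1; have [_ h2 h3] := Hv j1.
rewrite cB cW; case: (I2_cases l1) => -> /=.
  by rewrite mul1r.
have -> : c v j1 1 - 2%:R * \sum_k acoef k j1 * c v k 0 =
   (c v j1 1 - 2%:R * c v j1 0) + 2%:R * (c v j1 0 - \sum_k acoef k j1 * c v k 0) by ring.
by rewrite rpredD // rpredM // rpred_nat.
Qed.

Lemma inN_critE v : inN v <-> crit v.
Proof. by split; [apply: inN_crit | apply: crit_inN]. Qed.

Definition swl (b : bool) (l : 'I_2) : 'I_2 := if b then rev_ord l else l.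
Lemma swlK b : involutive (swl b).
Proof. by case: b => l //=; rewrite rev_ordK. Qed.
Lemma swl_inj b : injective (swl b). Proof. exact: inv_inj (swlK b). Qed.
Lemma gr_swl b l l' : gr (swl b l) (swl b l') = gr l l'.
Proof. by rewrite /gr (inj_eq (@swl_inj b)). Qed.

Definition mono (q : 'I_12 -> 'I_12) (sg : 'I_12 -> rat) (sw : 'I_12 -> bool) : Mx :=
  \sum_(j' < 12) \sum_(l' < 2)
    sg j' *: delta_mx (mxvec_index (q j') (swl (sw j') l')) (mxvec_index j' l').

Lemma mono_entry q sg sw j l j' l' :
  mono q sg sw (mxvec_index j l) (mxvec_index j' l') =
  sg j' * ((q j' == j) && (swl (sw j') l' == l))%:R.
Proof.
rewrite /mono summxE.
under eq_bigr => j1 _ do rewrite summxE; under eq_bigr => j1 _ do under eq_bigr => l1 _ do rewrite !mxE !mxvec_index_eq.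
rewrite (bigD1 j') //= [X in _ + X]big1 => [|j1 Hj1]; last first.
  by apply: big1 => l1 _; rewrite [j' == j1]eq_sym (negbTE Hj1) /= andbF mulr0.
rewrite addr0 (bigD1 l') //= [X in _ + X]big1 => [|l1 Hl1]; last first.
  by rewrite [l' == l1]eq_sym (negbTE Hl1) /= !andbF mulr0.
by rewrite !eqxx !andbT addr0 [j == _]eq_sym [l == _]eq_sym.
Qed.

Lemma c_mono q sg sw (v : V) j' l' :
  c (v *m mono q sg sw) j' l' = sg j' * c v (q j') (swl (sw j') l').
Proof.
rewrite /c mxE sum_idx.
under eq_bigr => j _ do under eq_bigr => l _ do rewrite mono_entry mulrCA.
rewrite -(sum_delta2 (fun j l => sg j' * v 0 (mxvec_index j l))).
by apply: eq_bigr => j _; apply: eq_bigr => l _; rewrite mulrA.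
Qed.

Lemma mono_bN q sg sw (s : {perm 'I_12}) :
  (forall j, q (s j) = j) -> (forall j, sg j * sg j = 1) ->
  forall u v, bN (u *m mono q sg sw) (v *m mono q sg sw) = bN u v.
Proof.
move=> Hq Hsg u v; rewrite !bNE.
have qE j : q j = (s^-1)%g j by rewrite -{1}(permKV s j) Hq.
have qinj : injective q by move=> x y; rewrite !qE; apply: perm_inj.
under eq_bigr => j _ do under eq_bigr => l _ do under eq_bigr => l' _ do rewrite !c_mono.
transitivity (\sum_j \sum_l \sum_l' c u (q j) l * gr l l' * c v (q j) l'); last first.
  by rewrite [RHS](reindex_inj qinj).
apply: eq_bigr => j _.
rewrite (reindex_inj (@swl_inj (sw j))) /=; apply: eq_bigr => l _.
rewrite (reindex_inj (@swl_inj (sw j))) /=; apply: eq_bigr => l' _.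
rewrite !swlK gr_swl; have := Hsg j; move: (sg j) => a Ha.
transitivity (a * a * (c u (q j) l * gr l l' * c v (q j) l')); first by ring.
by rewrite Ha mul1r.
Qed.

Lemma inA2E k v : inA2 k v <->
  (forall j l, j != k -> c v j l = 0) /\ (forall l, c v k l \is a Num.int).
Proof.
have cE (a : int ^ 2) j l : c (\sum_(i < 2) [:: Et k 0; Et k 1]`_i *~ a i) j l =
    ((j == k)%:R * (a l)%:~R).
  rewrite c_sum; under eq_bigr => i _ do rewrite cMz'.
  rewrite (eq_bigr (fun i => (j == k)%:R * (a i)%:~R * (l == i)%:R)); last first.
    move=> i _; case: (I2_cases i) => -> /=; rewrite cEt natr_and; ring.
  rewrite -(sum_delta (fun i => (j == k)%:R * (a i)%:~R) l).
  by apply: eq_bigr => i _; rewrite eq_sym.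
split.
  move=> [a ->]; split => [j l Hj|l]; rewrite cE ?(negbTE Hj) ?mul0r //.
  by rewrite eqxx mul1r intr_int.
move=> [H1 H2]; exists [ffun i => Num.floor (c v k i)].
apply: vecP => j l; rewrite cE ffunE; case: (eqVneq j k) => [->|Hj].
  by rewrite mul1r floorK.
by rewrite mul0r H1.
Qed.

Lemma mono_induces q sg sw (s : {perm 'I_12}) :
  (forall j, q (s j) = j) -> (forall j, sg j * sg j = 1) ->
  (forall j, sg j \is a Num.int) -> inducesPerm (mono q sg sw) s.
Proof.
move=> Hq Hsg Hint j v.
have qE j' : q j' = (s^-1)%g j' by rewrite -{1}(permKV s j') Hq.
have qs j' : (q j' == j) = (j' == s j).
  by rewrite qE; apply/eqP/eqP => [<-|->]; [rewrite permKV | rewrite permK].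
split.
  move=> /inA2E [H1 H2].
  pose b := sw (s j).
  exists (\sum_l (sg (s j) * c v (s j) l) *: Et j (swl b l)).
  set u := \sum_l _.
  have cu j'' l'' : c u j'' l'' = (j'' == j)%:R * (sg (s j) * c v (s j) (swl b l'')).
    rewrite c_sum; under eq_bigr => l _ do rewrite cZ cEt natr_and.
    under eq_bigr => l _ do rewrite -[l'' == _](inj_eq (@swl_inj b)) swlK mulrCA.
    by rewrite -mulr_sumr sum_delta.
  split.
    apply/inA2E; split => [j'' l'' Hj|l'']; rewrite cu ?(negbTE Hj) ?mul0r //.
    by rewrite eqxx mul1r rpredM.
  apply: vecP => j' l'; rewrite c_mono cu qs.
  case: (eqVneq j' (s j)) => [->|Hj']; last by rewrite mul0r mulr0 H1.
  rewrite /b swlK mul1r mulrA Hsg mul1r.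
  by [].
move=> [u [/inA2E [H1 H2] ->]].
apply/inA2E; split => [j' l' Hj'|l']; rewrite c_mono.
  by rewrite H1 ?mulr0 // qs.
by rewrite Hq rpredM.
Qed.

Lemma mulmx_inN (M : Mx) : (forall x, x \in genN -> inN (x *m M)) ->
  forall v, inN v -> inN (v *m M).
Proof.
move=> H v [a ->]; rewrite mulmx_suml; apply: inN_sum => i _.
rewrite -scaler_int -scalemxAl scaler_int; apply: inNMz; apply: H.
by rewrite -[genN]/(val (in_tuple genN)) mem_nth // size_tuple.
Qed.

Lemma mono_Nfwd q sg sw : (forall j, sg j \is a Num.int) ->
  all (fun r => critf (fun j l => sg j * wf r (q j) (swl (sw j) l))) glue_rows ->
  forall v, inN v -> inN (v *m mono q sg sw).
Proof.
move=> Hint Hc; apply: mulmx_inN => x.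
rewrite mem_cat => /orP [/mapP [[j0 l0] _ ->] | /mapP [r Hr ->]].
  by apply: inN_intcoords => j l; rewrite c_mono cEt rpredM ?rpred_nat.
apply: crit_inN; apply: (critfP (f := fun j l => sg j * wf r (q j) (swl (sw j) l))).
  by move=> j l; rewrite c_mono c_wvec.
by move/allP: Hc; apply.
Qed.

Lemma mx1P (A : Mx) : (forall v : V, v *m A = v) -> A = 1%:M.
Proof. by move=> H; apply/row_matrixP => i; rewrite !rowE H mulmx1. Qed.

Lemma mono_mul_inv q sg sw q' sg' sw' :
  (forall j, q (q' j) = j) -> (forall j, sw (q' j) = sw' j) ->
  (forall j, sg' j * sg (q' j) = 1) ->
  mono q sg sw *m mono q' sg' sw' = 1%:M.
Proof.
move=> Hq Hsw Hsg; apply: mx1P => v; rewrite mulmxA; apply: vecP => j l.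
by rewrite !c_mono Hq Hsw swlK mulrA Hsg mul1r.
Qed.

Notation T2 := ('I_3 * 'I_3)%type.

Definition kk (t : T2) : 'I_12 := mko 11 (nth 0%N (nth [::] iota_tab t.1) t.2).-1.
Definition tlist : seq T2 :=
  [:: (mko 2 2, mko 2 1); (mko 2 1, mko 2 2); (mko 2 1, mko 2 1); (mko 2 0, mko 2 1);
      (mko 2 1, mko 2 0); (mko 2 0, mko 2 0); (mko 2 0, mko 2 2); (mko 2 2, mko 2 0);
      (mko 2 2, mko 2 2)].
Definition tinv (j : 'I_12) : T2 := nth (mko 2 0, mko 2 0) tlist j.

Definition allT (P : T2 -> bool) := allI (fun t1 => allI (fun t2 => P (t1, t2))).
Lemma allTP P : allT P -> forall t, P t.
Proof. by rewrite /allT => H [t1 t2]; exact: (allIP (allIP H t1) t2). Qed.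
Lemma allTi (P : T2 -> bool) : (forall t, P t) -> allT P.
Proof. by move=> H; apply/allP => k _; apply/allP => k' _; apply: H. Qed.
Definition allC (P : Curve -> bool) := allT (fun t => allI (fun l => P (t, l))).
Lemma allCP P : allC P -> forall x, P x.
Proof. by rewrite /allC => H [t l]; exact: (allIP (allTP H t) l). Qed.

Lemma kk_lt9 t : (kk t < 9)%N.
Proof. by move: t; apply: allTP; vm_compute. Qed.
Lemma tinv_kk t : tinv (kk t) = t.
Proof. by apply/eqP; move: t; apply: allTP; vm_compute. Qed.
Lemma kk_tinv (j : 'I_12) : (j < 9)%N -> kk (tinv j) = j.
Proof.
move=> H; apply/eqP; move: H; apply/implyP; move: j; apply: allIP; by vm_compute.
Qed.
Lemma kk_inj : injective kk.
Proof. by move=> t t' E; rewrite -(tinv_kk t) E tinv_kk. Qed.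
Lemma inord_kk (t : T2) :
  (inord (nth 0%N (nth [::] iota_tab t.1) t.2).-1 : 'I_12) = kk t.
Proof.
have H : ((nth 0 (nth [::] iota_tab t.1) t.2).-1 < 12)%N by move: t; apply: allTP; vm_compute.
by apply: val_inj; rewrite /= inordK ?modn_small.
Qed.

Definition thetaf (f : Curve -> Curve) (j : 'I_12) : 'I_12 :=
  if (j < 9)%N then kk (f (tinv j, 0)).1 else j.

Lemma thetaf_ext f g : (forall x, f x = g x) -> forall j, thetaf f j = thetaf g j.
Proof. by move=> E j; rewrite /thetaf E. Qed.

Lemma thetaf'_inj (g : {perm Curve}) :
  injective (fun j => if injectiveb (thetaf g) then thetaf g j else j).
Proof.
by case: (boolP (injectiveb (thetaf g))) => H /=; [exact/injectiveP | move=> x y].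
Qed.

Definition theta (g : {perm Curve}) : {perm 'I_12} := perm (@thetaf'_inj g).

Lemma thetaE (g : {perm Curve}) : injective (thetaf g) -> forall j, theta g j = thetaf g j.
Proof. by move=> /injectiveP H j; rewrite permE H. Qed.

Definition rot (t : T2) : T2 := (- t.2, t.1).
Definition affc (k : 'I_4) (cc : T2) (x : Curve) : Curve :=
  let t' := iter k rot x.1 in ((t'.1 + cc.1, t'.2 + cc.2), swl (odd k) x.2).
Definition Aff (g : {perm Curve}) := exists k cc, forall x, g x = affc k cc x.

Definition tm k cc (t : T2) : T2 := (affc k cc (t, 0)).1.

Lemma affc_fiber k cc x : (affc k cc x).1 = tm k cc x.1.
Proof. by []. Qed.

Lemma tm_inj k cc : injective (tm k cc).
Proof.
have H : allI (fun k => allT (fun cc => allT (fun t => allT (fun t' =>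
   (tm k cc t == tm k cc t') ==> (t == t'))))).
  by vm_compute.
by move=> t t' /eqP E; apply/eqP; move: E; apply: implyP;
  apply: (allTP (allTP (allTP (allIP H k) cc) t) t').
Qed.

Lemma tm_id k cc : (forall t, tm k cc t = t) -> k = 0 /\ cc = (0, 0).
Proof.
have H : allI (fun k => allT (fun cc => allT (fun t => tm k cc t == t) ==>
   ((k == 0) && (cc == (0, 0))))).
  by vm_compute.
move=> E; have /andP [/eqP -> /eqP ->] // := implyP (allTP (allIP H k) cc) (allTi (fun t => introT eqP (E t))).
Qed.

Lemma affc_comp k1 c1 k2 c2 x :
  affc k2 c2 (affc k1 c1 x) = affc (k1 + k2) (tm k2 c2 c1) x.
Proof.
have H : allI (fun k1 => allT (fun c1 => allI (fun k2 => allT (fun c2 => allC (fun x =>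
   affc k2 c2 (affc k1 c1 x) == affc (k1 + k2) (tm k2 c2 c1) x))))).
  by vm_compute.
by apply/eqP; apply: (allCP (allTP (allIP (allTP (allIP H k1) c1) k2) c2) x).
Qed.

Lemma Aff_mul g1 g2 : Aff g1 -> Aff g2 -> Aff (g1 * g2)%g.
Proof.
move=> [k1 [c1 H1]] [k2 [c2 H2]]; exists (k1 + k2), (tm k2 c2 c1) => x.
by rewrite permM H1 H2 affc_comp.
Qed.

Lemma Aff1 : Aff 1%g.
Proof.
exists 0, (0, 0) => x; rewrite perm1; apply/eqP; move: x; apply: allCP.
by vm_compute.
Qed.

Lemma Aff_a1 : Aff alpha1.
Proof.
exists 0, (1, 0) => x; rewrite permE; apply/eqP; move: x; apply: allCP.
by vm_compute.
Qed.
Lemma Aff_a2 : Aff alpha2.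
Proof.
exists 0, (0, 1) => x; rewrite permE; apply/eqP; move: x; apply: allCP.
by vm_compute.
Qed.
Lemma Aff_b : Aff beta.
Proof.
exists 1, (0, 0) => x; rewrite permE; apply/eqP; move: x; apply: allCP.
by vm_compute.
Qed.

Lemma gens_in : [set alpha1; alpha2; beta] \subset SymX.
Proof. exact: subset_gen. Qed.
Lemma a1_in : alpha1 \in SymX.
Proof. by apply: (subsetP gens_in); rewrite !inE eqxx. Qed.
Lemma a2_in : alpha2 \in SymX.
Proof. by apply: (subsetP gens_in); rewrite !inE eqxx ?orbT. Qed.
Lemma b_in : beta \in SymX.
Proof. by apply: (subsetP gens_in); rewrite !inE eqxx ?orbT. Qed.

Lemma SymX_ind (P : {perm Curve} -> Prop) :
  P 1%g -> P alpha1 -> P alpha2 -> P beta ->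
  (forall g1 g2, g1 \in SymX -> g2 \in SymX -> P g1 -> P g2 -> P (g1 * g2)%g) ->
  forall g, g \in SymX -> P g.
Proof.
move=> H1 Ha1 Ha2 Hb HM g /gen_prodgP [n [f Hf ->]].
have Hf' i : f i \in SymX by apply: (subsetP gens_in).
elim: n f Hf Hf' => [|n IH] f Hf Hf'; first by rewrite big_ord0.
rewrite big_ord_recr /=; apply: HM.
- by apply: group_prod => i _.
- exact: Hf'.
- by apply: IH => i; [apply: Hf | apply: Hf'].
- by move: (Hf ord_max); rewrite !inE => /orP [/orP [] | ] /eqP ->.
Qed.

Lemma SymX_Aff g : g \in SymX -> Aff g.
Proof.
apply: SymX_ind; [exact: Aff1|exact: Aff_a1|exact: Aff_a2|exact: Aff_b|].
by move=> g1 g2 _ _; apply: Aff_mul.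
Qed.

Lemma Aff_fiber g x : Aff g -> (g x).1 = (g (x.1, 0)).1.
Proof. by move=> [k [cc H]]; rewrite !H. Qed.

Lemma Aff_tinj g : Aff g -> injective (fun t => (g (t, 0)).1).
Proof. by move=> [k [cc H]] t t' /=; rewrite !H; apply: tm_inj. Qed.

Lemma Aff_thetaf_inj g : Aff g -> injective (thetaf g).
Proof.
move=> Hg j1 j2; rewrite /thetaf.
case: ifP => H1; case: ifP => H2.
- move=> /kk_inj /(Aff_tinj Hg) E.
  by rewrite -(kk_tinv H1) -(kk_tinv H2) E.
- by move=> E; move: H2; rewrite -E kk_lt9.
- by move=> E; move: H1; rewrite E kk_lt9.
- by [].
Qed.

Lemma theta_mul g1 g2 : Aff g1 -> Aff g2 -> theta (g1 * g2)%g = (theta g1 * theta g2)%g.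
Proof.
move=> H1 H2; apply/permP => j.
have H12 := Aff_mul H1 H2.
rewrite permM !thetaE ?Aff_thetaf_inj //.
rewrite /thetaf; case: ifP => Hj; last by rewrite Hj.
rewrite kk_lt9 tinv_kk permM (Aff_fiber _ H2) //.
by apply: Aff_thetaf_inj.
by apply: Aff_thetaf_inj.
by apply: Aff_thetaf_inj.
Qed.

Lemma theta_ker g : Aff g -> theta g = 1%g -> g = 1%g.
Proof.
move=> Hg E; have [k [cc H]] := Hg.
have Ht : forall t, tm k cc t = t.
  move=> t; apply: kk_inj.
  have := thetaE (Aff_thetaf_inj Hg) (kk t); rewrite E perm1 /thetaf kk_lt9 tinv_kk => ->.
  by rewrite H.
have [Ek Ec] := tm_id Ht.
apply/permP => x; rewrite perm1 H Ek Ec; apply/eqP; move: x; apply: allCP.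
by vm_compute.
Qed.

Definition iotaC (x : Curve) (j : 'I_12) (l : 'I_2) : rat :=
  (if val x.1.1 == 1%N then -1 else 1) * ((kk x.1 == j) && (x.2 == l))%:R.

Lemma c_iotaE x j l : c (iotaE x) j l = iotaC x j l.
Proof.
case: x => [[t1 t2] l0]; rewrite /iotaE /iotaC /Et1 cZ cEt.
by rewrite (inord_kk (t1, t2)) [j == _]eq_sym [l == _]eq_sym.
Qed.

Definition qf (l : seq nat) (j : 'I_12) : 'I_12 := mko 11 (nth 0%N l j).
Definition sgf (l : seq int) (j : 'I_12) : rat := (nth 0 l j)%:~R.
Definition swf (l : seq bool) (j : 'I_12) : bool := nth false l j.
Definition Md q sg sw := mono (qf q) (sgf sg) (swf sw).

Definition Pl (g : {perm Curve}) :=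
  exists M, [/\ AutN M, M \in unitmx, extends M g & inducesPerm M (theta g)].

Lemma lift_ok (g : {perm Curve}) (gf : Curve -> Curve) q sg sw q' sg' sw' :
  (forall x, g x = gf x) -> Aff g ->
  allI (fun j => [&& qf q (qf q' j) == j, swf sw (qf q' j) == swf sw' j
                   & sgf sg' j * sgf sg (qf q' j) == 1]) ->
  allI (fun j => [&& sgf sg j * sgf sg j == 1, sgf sg j \is a Num.int
                   & sgf sg' j \is a Num.int]) ->
  all (fun r => critf (fun j l => sgf sg j * wf r (qf q j) (swl (swf sw j) l))) glue_rows ->
  all (fun r => critf (fun j l => sgf sg' j * wf r (qf q' j) (swl (swf sw' j) l))) glue_rows ->
  allC (fun x => allI (fun j => allI (fun l =>
     sgf sg j * iotaC x (qf q j) (swl (swf sw j) l) == iotaC (gf x) j l))) ->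
  allI (fun j => qf q (thetaf gf j) == j) ->
  Pl g.
Proof.
move=> Eg Ag C1 C4 C5 C5' C6 C7.
have C1j j := allIP C1 j; have C4j j := allIP C4 j.
have Hth j : qf q (theta g j) = j.
  rewrite thetaE; last exact: Aff_thetaf_inj.
  rewrite (thetaf_ext Eg); exact/eqP/(allIP C7 j).
have Hsg j : sgf sg j * sgf sg j = 1 by case/and3P: (C4j j) => /eqP.
have Hint j : sgf sg j \is a Num.int by case/and3P: (C4j j).
have Hint' j : sgf sg' j \is a Num.int by case/and3P: (C4j j).
have Hinv : Md q sg sw *m Md q' sg' sw' = 1%:M.
  by apply: mono_mul_inv => j; case/and3P: (C1j j) => /eqP ? /eqP ? /eqP ?.
have Hinv' := mulmx1C Hinv.
exists (Md q sg sw); split.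
- split; first exact: (mono_bN (swf sw) Hth Hsg).
  split; first exact: mono_Nfwd.
  move=> v Hv; exists (v *m Md q' sg' sw'); split; first exact: mono_Nfwd.
  by rewrite -mulmxA Hinv' mulmx1.
- by case: (mulmx1_unit Hinv).
- move=> x; apply: vecP => j l; rewrite c_mono !c_iotaE Eg.
  exact/eqP/(allIP (allIP (allCP C6 x) j) l).
- exact: mono_induces.
Qed.

Lemma Pl_a1 : Pl alpha1.
Proof.
apply: (lift_ok (gf := a1f)
  (q := [:: 2; 6; 3; 0; 5; 7; 8; 4; 1; 9; 10; 11]%N)
  (sg := [:: -1; -1; -1; 1; -1; 1; 1; -1; -1; 1; 1; 1])
  (sw := [:: false; false; false; false; false; false; false; false; false; false; false; false])
  (q' := [:: 3; 8; 0; 2; 7; 4; 1; 5; 6; 9; 10; 11]%N)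
  (sg' := [:: 1; -1; -1; -1; -1; -1; -1; 1; 1; 1; 1; 1])
  (sw' := [:: false; false; false; false; false; false; false; false; false; false; false; false]));
  try by vm_compute.
- by move=> x; rewrite permE.
- exact: Aff_a1.
Qed.

Lemma Pl_a2 : Pl alpha2.
Proof.
apply: (lift_ok (gf := a2f)
  (q := [:: 7; 2; 4; 5; 1; 6; 3; 8; 0; 9; 10; 11]%N)
  (sg := [:: 1; 1; 1; 1; 1; 1; 1; 1; 1; 1; 1; 1])
  (sw := [:: false; false; false; false; false; false; false; false; false; false; false; false])
  (q' := [:: 8; 4; 1; 6; 2; 3; 5; 0; 7; 9; 10; 11]%N)
  (sg' := [:: 1; 1; 1; 1; 1; 1; 1; 1; 1; 1; 1; 1])
  (sw' := [:: false; false; false; false; false; false; false; false; false; false; false; false]));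
  try by vm_compute.
- by move=> x; rewrite permE.
- exact: Aff_a2.
Qed.

Lemma Pl_b : Pl beta.
Proof.
apply: (lift_ok (gf := bf)
  (q := [:: 2; 8; 1; 4; 6; 5; 7; 3; 0; 9; 10; 11]%N)
  (sg := [:: -1; -1; 1; -1; -1; 1; 1; 1; 1; 1; 1; -1])
  (sw := [:: true; true; true; true; true; true; true; true; true; false; false; false])
  (q' := [:: 8; 2; 0; 7; 3; 5; 4; 6; 1; 9; 10; 11]%N)
  (sg' := [:: 1; 1; -1; 1; -1; 1; -1; 1; -1; 1; 1; -1])
  (sw' := [:: true; true; true; true; true; true; true; true; true; false; false; false]));
  try by vm_compute.
- by move=> x; rewrite permE.
- exact: Aff_b.
Qed.

Lemma induces_mul M1 M2 s1 s2 : inducesPerm M1 s1 -> inducesPerm M2 s2 ->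
  inducesPerm (M1 *m M2) (s1 * s2)%g.
Proof.
move=> H1 H2 j v; rewrite permM; split.
  move=> /(H2 (s1 j) v) [u2 [/(H1 j u2) [u1 [Hu1 ->]] ->]].
  by exists u1; rewrite mulmxA.
move=> [u [Hu ->]]; apply/(H2 (s1 j)); exists (u *m M1); rewrite mulmxA; split => //.
by apply/(H1 j); exists u.
Qed.

Lemma AutN_mul M1 M2 : AutN M1 -> AutN M2 -> AutN (M1 *m M2).
Proof.
move=> [B1 [F1 S1]] [B2 [F2 S2]]; split; [|split].
- by move=> u v; rewrite !mulmxA B2 B1.
- by move=> v Hv; rewrite mulmxA; apply: F2; apply: F1.
- move=> v Hv; have [u2 [Hu2 E2]] := S2 v Hv; have [u1 [Hu1 E1]] := S1 u2 Hu2.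
  by exists u1; rewrite mulmxA E1.
Qed.

Lemma Pl_mul g1 g2 : Aff g1 -> Aff g2 -> Pl g1 -> Pl g2 -> Pl (g1 * g2)%g.
Proof.
move=> A1 A2 [M1 [Au1 U1 E1 I1]] [M2 [Au2 U2 E2 I2]].
exists (M1 *m M2); split.
- exact: AutN_mul.
- by rewrite unitmx_mul U1.
- by move=> x; rewrite mulmxA E1 E2 permM.
- by rewrite theta_mul //; apply: induces_mul.
Qed.

Lemma theta1 : theta 1%g = 1%g.
Proof.
apply/permP => j; rewrite thetaE; last exact: (Aff_thetaf_inj Aff1).
by rewrite perm1 /thetaf; case: ifP => // H; rewrite perm1 kk_tinv.
Qed.

Lemma Pl1 : Pl 1%g.
Proof.
exists 1%:M; split.
- split; [|split].
  + by move=> u v; rewrite !mulmx1.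
  + by move=> v; rewrite mulmx1.
  + by move=> v Hv; exists v; rewrite mulmx1.
- exact: unitmx1.
- by move=> x; rewrite mulmx1 perm1.
- by rewrite theta1 => j v; rewrite perm1; split => [H|[u [Hu ->]]];
    [exists v; rewrite mulmx1 | rewrite mulmx1].
Qed.

Lemma SymX_Pl g : g \in SymX -> Pl g.
Proof.
have H : forall g, g \in SymX -> Aff g /\ Pl g.
  apply: SymX_ind.
  - by split; [exact: Aff1 | exact: Pl1].
  - by split; [exact: Aff_a1 | exact: Pl_a1].
  - by split; [exact: Aff_a2 | exact: Pl_a2].
  - by split; [exact: Aff_b | exact: Pl_b].
  - move=> g1 g2 _ _ [A1 P1] [A2 P2]; split; first exact: Aff_mul.
    exact: Pl_mul.
by move=> Hg; case: (H g Hg).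
Qed.

Lemma sum2 (F : 'I_2 -> rat) : \sum_l F l = F 0 + F 1.
Proof. by rewrite !big_ord_recr big_ord0 /= add0r; congr (F _ + F _); apply: val_inj. Qed.

Lemma gr00 : gr 0 0 = 2%:R. Proof. by []. Qed.
Lemma gr01 : gr 0 1 = -1. Proof. by []. Qed.
Lemma gr10 : gr 1 0 = -1. Proof. by []. Qed.
Lemma gr11 : gr 1 1 = 2%:R. Proof. by []. Qed.

Lemma quad (X Y : 'I_2 -> rat) : \sum_l \sum_l' X l * gr l l' * Y l' =
  2%:R * X 0 * Y 0 - X 0 * Y 1 - X 1 * Y 0 + 2%:R * X 1 * Y 1.
Proof. rewrite !sum2 gr00 gr01 gr10 gr11; ring. Qed.

Lemma bN_Et (w : V) k l' : bN w (Et k l') = \sum_l c w k l * gr l l'.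
Proof.
rewrite bNE (bigD1 k) //= [X in _ + X]big1 ?addr0 => [|j Hj]; last first.
  by apply: big1 => l _; apply: big1 => l'' _; rewrite cEt (negbTE Hj) mulr0.
apply: eq_bigr => l _; rewrite (bigD1 l') //= [X in _ + X]big1 ?addr0 => [|l'' H]; last first.
  by rewrite cEt (negbTE H) andbF mulr0.
by rewrite cEt !eqxx mulr1.
Qed.

Lemma sum12_tail (F : 'I_12 -> rat) : (forall k : 'I_12, (k < 9)%N -> F k = 0) ->
  \sum_k F k = F (mko 11 9) + F (mko 11 10) + F (mko 11 11).
Proof.
move=> H; rewrite fsumE /fsum /=.
rewrite (H (mko 11 0)) // (H (mko 11 1)) // (H (mko 11 2)) // (H (mko 11 3)) //.
rewrite (H (mko 11 4)) // (H (mko 11 5)) // (H (mko 11 6)) // (H (mko 11 7)) //.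
rewrite (H (mko 11 8)) //.
by rewrite !add0r addr0 addrA.
Qed.

Lemma ge9_cases (k : 'I_12) : (9 <= k)%N -> k = mko 11 9 \/ k = mko 11 10 \/ k = mko 11 11.
Proof.
move=> H; have : (k == mko 11 9) || (k == mko 11 10) || (k == mko 11 11).
  by move: H; apply/implyP; move: k; apply: allIP; vm_compute.
by case/orP => [/orP [] | ] /eqP ->; auto.
Qed.

Lemma NW_int (w : V) : inN w -> (forall (k : 'I_12) l, (k < 9)%N -> c w k l = 0) ->
  forall k l, c w k l \is a Num.int.
Proof.
move=> /inN_crit Hc H0.
have S (j : 'I_12) : (j < 9)%N -> acoef (mko 11 9) j * c w (mko 11 9) 0 +
    acoef (mko 11 10) j * c w (mko 11 10) 0 + acoef (mko 11 11) j * c w (mko 11 11) 0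
    \is a Num.int.
  move=> Hj; have [_ _ h] := Hc j; move: h; rewrite /f3 H0 // add0r rpredN.
  by rewrite sum12_tail // => k Hk; rewrite H0 // mulr0.
have S3 := S (mko 11 3) isT; have S4 := S (mko 11 4) isT; have S5 := S (mko 11 5) isT.
move: S3 S4 S5.
have -> : acoef (mko 11 9) (mko 11 3) = 0 by apply/eqP; vm_compute.
have -> : acoef (mko 11 10) (mko 11 3) = 1 by apply/eqP; vm_compute.
have -> : acoef (mko 11 11) (mko 11 3) = -1 by apply/eqP; vm_compute.
have -> : acoef (mko 11 9) (mko 11 4) = 1 by apply/eqP; vm_compute.
have -> : acoef (mko 11 10) (mko 11 4) = 0 by apply/eqP; vm_compute.
have -> : acoef (mko 11 11) (mko 11 4) = 1 by apply/eqP; vm_compute.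
have -> : acoef (mko 11 9) (mko 11 5) = -1 by apply/eqP; vm_compute.
have -> : acoef (mko 11 10) (mko 11 5) = 1 by apply/eqP; vm_compute.
have -> : acoef (mko 11 11) (mko 11 5) = 0 by apply/eqP; vm_compute.
set x9 := c w (mko 11 9) 0; set x10 := c w (mko 11 10) 0; set x11 := c w (mko 11 11) 0.
move=> S3 S4 S5.
have h9 : 3%:R * x9 \is a Num.int by have [h _ _] := Hc (mko 11 9).
have i9 : x9 \is a Num.int.
  have -> : x9 = 3%:R * x9 - ((0 * x9 + 1 * x10 + -1 * x11) + (1 * x9 + 0 * x10 + 1 * x11)
     - (-1 * x9 + 1 * x10 + 0 * x11)) by ring.
  by rewrite rpredB // rpredB // rpredD.
have i10 : x10 \is a Num.int.
  have -> : x10 = (-1 * x9 + 1 * x10 + 0 * x11) + x9 by ring.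
  by rewrite rpredD.
have i11 : x11 \is a Num.int.
  have -> : x11 = (1 * x9 + 0 * x10 + 1 * x11) - x9 by ring.
  by rewrite rpredB.
have i0 k : c w k 0 \is a Num.int.
  case: (ltnP k 9) => Hk; first by rewrite H0 // rpred0.
  by case: (ge9_cases Hk) => [->|[->|->]].
move=> k l; case: (I2_cases l) => ->; first exact: i0.
have [_ h _] := Hc k; have -> : c w k 1 = (c w k 1 - 2%:R * c w k 0) + 2%:R * c w k 0 by ring.
by rewrite rpredD // rpredM ?rpred_nat.
Qed.

Lemma iotaE_Et (t : T2) l :
  iotaE (t, l) = (if val t.1 == 1%N then -1 else 1) *: Et (kk t) l.
Proof. by case: t => t1 t2; rewrite /iotaE /Et1 (inord_kk (t1, t2)). Qed.

Lemma fixEt (K : Mx) : (forall x, iotaE x *m K = iotaE x) ->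
  forall (j : 'I_12) l, (j < 9)%N -> Et j l *m K = Et j l.
Proof.
move=> H j l Hj; have := H (tinv j, l); rewrite iotaE_Et kk_tinv // -scalemxAl.
set s := (if _ then _ else _) => E.
have Hs : s * s = 1 by rewrite /s; case: ifP => _; rewrite ?mulrNN mulr1.
by have := congr1 (fun v => s *: v) E; rewrite !scalerA Hs !scale1r.
Qed.

Lemma fixU (K : Mx) : (forall (j : 'I_12) l, (j < 9)%N -> Et j l *m K = Et j l) ->
  forall u : V, (forall (k : 'I_12) l, (9 <= k)%N -> c u k l = 0) -> u *m K = u.
Proof.
move=> H u Hu; rewrite [u in LHS]vec_decomp mulmx_suml [RHS]vec_decomp.
apply: eq_bigr => j _; rewrite mulmx_suml; apply: eq_bigr => l _.
rewrite -scalemxAl; case: (ltnP j 9) => Hj; first by rewrite H.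
by rewrite Hu // !scale0r.
Qed.

Lemma orth (K : Mx) : (forall u v : V, bN (u *m K) (v *m K) = bN u v) ->
  (forall (j : 'I_12) l, (j < 9)%N -> Et j l *m K = Et j l) ->
  forall v : V, (forall (k : 'I_12) l, (k < 9)%N -> c v k l = 0) ->
  forall (k : 'I_12) l, (k < 9)%N -> c (v *m K) k l = 0.
Proof.
move=> HB HE v Hv k l Hk.
have h l' : c (v *m K) k 0 * gr 0 l' + c (v *m K) k 1 * gr 1 l' = 0.
  rewrite -(sum2 (fun l0 => c (v *m K) k l0 * gr l0 l')) -bN_Et -(HE k l' Hk) HB bN_Et.
  by apply: big1 => l0 _; rewrite Hv // mul0r.
have h0 := h 0; have h1 := h 1; rewrite gr00 gr10 in h0; rewrite gr01 gr11 in h1.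
by case: (I2_cases l) => ->; lra.
Qed.

Definition qf2 (x y : rat) := x * x - x * y + y * y.

Lemma qf2_facts x y : x \is a Num.int -> y \is a Num.int ->
  [/\ qf2 x y \is a Num.int, 0 <= qf2 x y & (qf2 x y = 0 -> x = 0 /\ y = 0)].
Proof.
move=> Hx Hy; split.
- by rewrite /qf2 rpredD ?rpredB ?rpredM.
- have h1 := sqr_ge0 (2%:R * x - y); have h2 := sqr_ge0 y; rewrite /qf2; nra.
- rewrite /qf2 => H.
  have h1 := sqr_ge0 (2%:R * x - y); have h2 := sqr_ge0 y.
  have hy : y ^+ 2 = 0 by nra.
  have y0 : y = 0 by apply/eqP; move: hy => /eqP; rewrite expf_eq0.
  subst y; split => //; nra.
Qed.

Lemma int_ge1 (x : rat) : x \is a Num.int -> 0 < x -> 1 <= x.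
Proof. by move=> /intrP [n ->]; rewrite ltr0z ler1z; lia. Qed.

Lemma zero2 (e : V) k : c e k 0 = 0 -> c e k 1 = 0 -> forall l, c e k l = 0.
Proof. by move=> h0 h1 l; case: (I2_cases l) => ->. Qed.

Lemma supp_one (e : V) : (forall (k : 'I_12) l, (k < 9)%N -> c e k l = 0) ->
  (forall k l, c e k l \is a Num.int) -> bN e e = 2%:R ->
  exists k0 : 'I_12, (9 <= k0)%N /\ forall k l, k != k0 -> c e k l = 0.
Proof.
move=> H0 Hi; rewrite bNE sum12_tail => [|k Hk]; last by rewrite quad !H0 //; ring.
rewrite !quad => E.
have [i9 p9 z9] := qf2_facts (Hi (mko 11 9) 0) (Hi (mko 11 9) 1).
have [i10 p10 z10] := qf2_facts (Hi (mko 11 10) 0) (Hi (mko 11 10) 1).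
have [i11 p11 z11] := qf2_facts (Hi (mko 11 11) 0) (Hi (mko 11 11) 1).
move: E i9 p9 z9 i10 p10 z10 i11 p11 z11.
set a9 := c e (mko 11 9) 0; set b9 := c e (mko 11 9) 1.
set a10 := c e (mko 11 10) 0; set b10 := c e (mko 11 10) 1.
set a11 := c e (mko 11 11) 0; set b11 := c e (mko 11 11) 1.
move=> E i9 p9 z9 i10 p10 z10 i11 p11 z11.
have E' : qf2 a9 b9 + qf2 a10 b10 + qf2 a11 b11 = 1 by rewrite /qf2; lra.
have fin (k0 : 'I_12) : (9 <= k0)%N ->
    (forall k : 'I_12, (9 <= k)%N -> k != k0 -> c e k 0 = 0 /\ c e k 1 = 0) ->
    exists k0 : 'I_12, (9 <= k0)%N /\ forall k l, k != k0 -> c e k l = 0.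
  move=> Hk0 H; exists k0; split => // k l Hk.
  case: (ltnP k 9) => Hk9; first exact: H0.
  by have [h0 h1] := H k Hk9 Hk; apply: zero2.
have g (x : rat) : x \is a Num.int -> 0 <= x -> x != 0 -> 1 <= x.
  by move=> h1 h2 h3; apply: int_ge1 => //; rewrite lt0r h3 h2.
have [e9|n9] := eqVneq (qf2 a9 b9) 0; have [e10|n10] := eqVneq (qf2 a10 b10) 0;
  have [e11|n11] := eqVneq (qf2 a11 b11) 0.
- by exfalso; lra.
- apply: (fin (mko 11 11)) => // k Hk.
  case: (ge9_cases Hk) => [->|[->|->]] _ //; [exact: z9 | exact: z10].
- apply: (fin (mko 11 10)) => // k Hk.
  case: (ge9_cases Hk) => [->|[->|->]] _ //; [exact: z9 | exact: z11].
- by have := g _ i10 p10 n10; have := g _ i11 p11 n11; lra.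
- apply: (fin (mko 11 9)) => // k Hk.
  case: (ge9_cases Hk) => [->|[->|->]] _ //; [exact: z10 | exact: z11].
- by have := g _ i9 p9 n9; have := g _ i11 p11 n11; lra.
- by have := g _ i9 p9 n9; have := g _ i10 p10 n10; lra.
- by have := g _ i9 p9 n9; have := g _ i10 p10 n10; lra.
Qed.

Lemma glue_tail (j k : 'I_12) : (9 <= j)%N -> (9 <= k)%N ->
  nth 0 (nth [::] glue_rows (j - 6)) k = (k == j)%:Z.
Proof.
have H : allI (fun j : 'I_12 => allI (fun k : 'I_12 => (9 <= j)%N ==> (9 <= k)%N ==>
  (nth 0 (nth [::] glue_rows (j - 6)) k == (k == j)%:Z))) by vm_compute.
by move=> Hj Hk; apply/eqP; move: Hk; apply/implyP; move: Hj; apply/implyP;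
  apply: (allIP (allIP H j) k).
Qed.

Lemma bN_supp (x y : V) j : (forall k l, k != j -> c x k l = 0) ->
  bN x y = \sum_l \sum_l' c x j l * gr l l' * c y j l'.
Proof.
move=> H; rewrite bNE (bigD1 j) //= [X in _ + X]big1 ?addr0 // => k Hk.
by apply: big1 => l _; apply: big1 => l' _; rewrite H // mul0r mul0r.
Qed.

Lemma Hmain (K : Mx) :
  (forall u v : V, bN (u *m K) (v *m K) = bN u v) ->
  (forall v, inN v -> inN (v *m K)) ->
  (forall x, iotaE x *m K = iotaE x) ->
  forall j : 'I_12, (9 <= j)%N ->
  (forall l k l', k != j -> c (Et j l *m K) k l' = 0) /\
  (forall l k l', c (Et j l *m K) k l' \is a Num.int).
Proof.
move=> HB HN HI; have HE := fixEt HI; move=> j Hj.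
have cEtj l (k : 'I_12) l' : (k < 9)%N -> c (Et j l) k l' = 0.
  move=> Hk; rewrite cEt; case: eqP => [E|_] //; by move: Hk Hj; rewrite E; lia.
have Z l (k : 'I_12) l' : (k < 9)%N -> c (Et j l *m K) k l' = 0.
  by move=> Hk; apply: (orth HB HE) => // k1 l1 Hk1; apply: cEtj.
have I l k l' : c (Et j l *m K) k l' \is a Num.int.
  by apply: (NW_int (HN _ (inN_Et j l))) => k1 l1 Hk1; apply: Z.
split => //.
have N l : bN (Et j l *m K) (Et j l *m K) = 2%:R.
  rewrite HB bN_Et sum2 !cEt !eqxx /=.
  by case: (I2_cases l) => ->.
have [k0 [Hk0 S0]] := supp_one (Z 0) (I 0) (N 0).
have [k1 [Hk1 S1]] := supp_one (Z 1) (I 1) (N 1).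
have k01 : k0 = k1.
  apply/eqP; apply/negP => /negP Hne.
  have : bN (Et j 0 *m K) (Et j 1 *m K) = -1.
    by rewrite HB bN_Et sum2 !cEt !eqxx /=.
  rewrite bNE big1 => [|k _].
    by move/eqP; rewrite eq_sym oppr_eq0.
  apply: big1 => l _; apply: big1 => l' _.
  case: (eqVneq k k0) => [Ek|Nk]; last by rewrite S0 // !mul0r.
  by rewrite [c (Et j 1 *m K) _ _]S1 ?mulr0 // Ek.
subst k1.
have kj : k0 = j.
  apply/eqP; apply/negP => /negP Hne.
  set r := nth [::] glue_rows (j - 6).
  have Hr : r \in glue_rows by apply: mem_nth; rewrite [size _]/=; have := ltn_ord j; lia.
  set X := 3%:R^-1 *: (Et j 0 + 2%:R *: Et j 1).
  set u := wvec r - X.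
  have cu (k : 'I_12) l : (9 <= k)%N -> c u k l = 0.
    move=> Hk; rewrite /u /X cB c_wvec /wf glue_tail // cZ cD cZ !cEt.
    case: (I2_cases l) => -> /=; case: (k == j) => /=; ring.
  have uK := fixU HE cu.
  have wK : wvec r *m K = u + 3%:R^-1 *: (Et j 0 *m K + 2%:R *: (Et j 1 *m K)).
    by rewrite -{1}[wvec r](subrK X) mulmxDl uK /X -scalemxAl mulmxDl -scalemxAl.
  set d := wvec r *m K - wvec r.
  have dN : inN d by apply: inNB; [apply: HN | ]; apply: inN_w.
  have cd k l : c d k l = 3%:R^-1 * (c (Et j 0 *m K) k l + 2%:R * c (Et j 1 *m K) k l
      - c (Et j 0) k l - 2%:R * c (Et j 1) k l).
    rewrite /d wK -{1}[wvec r](subrK X) -/u /X !cB !cD !cZ !cD !cZ; ring.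
  have dZ (k : 'I_12) l : (k < 9)%N -> c d k l = 0.
    by move=> Hk; rewrite cd !Z // !cEtj //; ring.
  have := NW_int dN dZ j 0.
  have Hne' : j != k0 by rewrite eq_sym.
  rewrite cd (S0 j 0 Hne') (S1 j 0 Hne') !cEt !eqxx /=.
  rewrite mulr0 addr0 add0r.
  by vm_compute.
subst k0.
by move=> l k l' Hk; case: (I2_cases l) => ->; [apply: S0 | apply: S1].
Qed.

Lemma supp_decomp (w : V) j : (forall k l, k != j -> c w k l = 0) ->
  w = c w j 0 *: Et j 0 + c w j 1 *: Et j 1.
Proof.
move=> H; apply: vecP => k l; rewrite cD !cZ !cEt.
case: (eqVneq k j) => [->|Hk]; last by rewrite H // !mulr0 addr0.
by case: (I2_cases l) => -> /=; rewrite ?mulr0 ?mulr1 ?addr0 ?add0r.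
Qed.

Lemma H_induces (K : Mx) :
  (forall u v : V, bN (u *m K) (v *m K) = bN u v) ->
  (forall v, inN v -> inN (v *m K)) ->
  (forall x, iotaE x *m K = iotaE x) ->
  inducesPerm K 1%g.
Proof.
move=> HB HN HI; have HE := fixEt HI; move=> j v; rewrite perm1.
case: (ltnP j 9) => Hj.
  have fix_u u : inA2 j u -> u *m K = u.
    move=> /inA2E [H1 _]; apply: (fixU HE) => k l Hk; apply: H1.
    by apply/eqP => E; move: Hk Hj; rewrite E; lia.
  split => [Hv|[u [Hu ->]]]; last by rewrite fix_u.
  by exists v; rewrite fix_u.
have [S I] := Hmain HB HN HI Hj.
set e0 := Et j 0 *m K; set e1 := Et j 1 *m K.
set a := c e0 j 0; set b := c e0 j 1; set c' := c e1 j 0; set d' := c e1 j 1.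
have N0 : 2%:R * a * a - a * b - b * a + 2%:R * b * b = 2%:R.
  by rewrite -quad -bN_supp ?HB ?bN_Et ?sum2 ?cEt ?eqxx //; apply: S.
have N1 : 2%:R * c' * c' - c' * d' - d' * c' + 2%:R * d' * d' = 2%:R.
  by rewrite -quad -bN_supp ?HB ?bN_Et ?sum2 ?cEt ?eqxx //; apply: S.
have N01 : 2%:R * a * c' - a * d' - b * c' + 2%:R * b * d' = -1.
  by rewrite -quad -bN_supp ?HB ?bN_Et ?sum2 ?cEt ?eqxx //; apply: S.
set de := a * d' - b * c'.
have de2 : de * de = 1.
  have id : (2%:R * a * a - a * b - b * a + 2%:R * b * b) *
            (2%:R * c' * c' - c' * d' - d' * c' + 2%:R * d' * d') -
            (2%:R * a * c' - a * d' - b * c' + 2%:R * b * d') ^+ 2 = 3%:R * (de * de).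
    by rewrite /de; ring.
  rewrite N0 N1 N01 in id; lra.
have Ia := I 0 j 0; have Ib := I 0 j 1; have Ic := I 1 j 0; have Id := I 1 j 1.
have Ide : de \is a Num.int by rewrite rpredB ?rpredM.
have imgE (p q : rat) : (p *: Et j 0 + q *: Et j 1) *m K = p *: e0 + q *: e1.
  by rewrite mulmxDl -!scalemxAl.
have img_supp (p q : rat) k l : k != j -> c (p *: e0 + q *: e1) k l = 0.
  by move=> Hk; rewrite cD !cZ !S // !mulr0 addr0.
split.
  move=> /inA2E [H1 H2]; have Hx0 := H2 0; have Hx1 := H2 1.
  set x0 := c v j 0 in Hx0; set x1 := c v j 1 in Hx1.
  exists ((de * (x0 * d' - x1 * c')) *: Et j 0 + (de * (x1 * a - x0 * b)) *: Et j 1).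
  split.
    apply/inA2E; split => [k l Hk|l]; first by rewrite cD !cZ !cEt (negbTE Hk) !mulr0 addr0.
    rewrite cD !cZ !cEt !eqxx /=.
    case: (I2_cases l) => -> /=; rewrite ?mulr0 ?mulr1 ?addr0 ?add0r;
      by rewrite rpredM // rpredB // rpredM.
  rewrite imgE [v](supp_decomp H1) -/x0 -/x1; apply: vecP => k l.
  case: (eqVneq k j) => [->|Hk]; last by rewrite img_supp // cD !cZ !cEt (negbTE Hk) !mulr0 addr0.
  rewrite !cD !cZ !cEt !eqxx -/a -/b -/c' -/d'.
  case: (I2_cases l) => -> /=; rewrite ?mulr0 ?mulr1 ?addr0 ?add0r -/a -/b -/c' -/d'.
    transitivity (x0 * (de * de)); first by rewrite de2 mulr1.
    by rewrite /de; ring.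
  transitivity (x1 * (de * de)); first by rewrite de2 mulr1.
  by rewrite /de; ring.
move=> [u [/inA2E [H1 H2] ->]].
rewrite [u](supp_decomp H1) imgE; apply/inA2E; split => [k l Hk|l]; first exact: img_supp.
by rewrite cD !cZ rpredD ?rpredM ?H2 ?I.
Qed.

Lemma lift_induces g M : g \in SymX -> AutN M -> extends M g -> inducesPerm M (theta g).
Proof.
move=> Hg [BM [NM SM]] EM.
have [M0 [[B0 [N0 S0]] U0 E0 I0]] := SymX_Pl Hg.
pose K := M *m invmx M0.
have HB : forall u v : V, bN (u *m K) (v *m K) = bN u v.
  by move=> u v; rewrite -B0 /K !mulmxA !(mulmxKV U0) BM.
have HN : forall v, inN v -> inN (v *m K).
  move=> v Hv; have [w [Hw Ew]] := S0 _ (NM _ Hv).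
  by rewrite /K mulmxA -Ew (mulmxK U0).
have HI : forall x, iotaE x *m K = iotaE x.
  by move=> x; rewrite /K mulmxA EM -E0 (mulmxK U0).
have IK := H_induces HB HN HI.
have -> : M = K *m M0 by rewrite /K (mulmxKV U0).
by rewrite -[theta g]mul1g; apply: induces_mul.
Qed.

Lemma induced_uniq M s1 s2 : inducesPerm M s1 -> inducesPerm M s2 -> s1 = s2.
Proof.
move=> H1 H2; apply/permP => j.
have Hin : inA2 (s1 j) (Et (s1 j) 0).
  by apply/inA2E; split => [k l Hk|l]; rewrite cEt ?(negbTE Hk) // rpred_nat.
have /(H2 j) /inA2E [Z _] := (H1 j _).1 Hin.
apply/eqP/negP => /negP Hne; have := Z (s1 j) 0 Hne; rewrite cEt !eqxx /=.
by move/eqP; rewrite oner_eq0.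
Qed.

Lemma thetaM : {in SymX &, {morph theta : x y / (x * y)%g}}.
Proof. by move=> x y Hx Hy; exact: theta_mul (SymX_Aff Hx) (SymX_Aff Hy). Qed.

Definition Theta : {morphism SymX >-> {perm 'I_12}} := Morphism thetaM.

Lemma Theta_gen g gf : g \in SymX -> (forall x, g x = gf x) -> forall j, Theta g j = thetaf gf j.
Proof.
move=> Hg E j; rewrite /= thetaE; last exact: Aff_thetaf_inj (SymX_Aff Hg).
exact: thetaf_ext.
Qed.

Theorem mainTheorem17 :
  (forall g, g \in SymX -> exists M, AutN M /\ extends M g) /\
  (forall g M, g \in SymX -> AutN M -> extends M g ->
     exists s : {perm 'I_12}, inducesPerm M s) /\
  (forall g M1 M2 (s1 s2 : {perm 'I_12}), g \in SymX ->
     AutN M1 -> AutN M2 -> extends M1 g -> extends M2 g ->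
     inducesPerm M1 s1 -> inducesPerm M2 s2 -> s1 = s2) /\
  exists Theta : {morphism SymX >-> {perm 'I_12}},
    (forall g M, g \in SymX -> AutN M -> extends M g -> inducesPerm M (Theta g)) /\
    ('injm Theta)%g /\
    (forall g, g \in SymX -> inM12 (Theta g)) /\
    (Theta @* SymX = <<[set Theta alpha1; Theta alpha2; Theta beta]>>)%g /\
    (forall j : 'I_12, (Theta alpha1 j).+1 =
        cyc [:: [:: 1; 4; 3]; [:: 2; 9; 7]; [:: 5; 8; 6]]%N j.+1) /\
    (forall j : 'I_12, (Theta alpha2 j).+1 =
        cyc [:: [:: 1; 9; 8]; [:: 2; 5; 3]; [:: 4; 7; 6]]%N j.+1) /\
    (forall j : 'I_12, (Theta beta j).+1 =
        cyc [:: [:: 1; 9; 2; 3]; [:: 4; 8; 7; 5]]%N j.+1).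
Proof.
split.
  by move=> g Hg; have [M [A _ E _]] := SymX_Pl Hg; exists M.
split.
  by move=> g M Hg A E; exists (theta g); apply: lift_induces.
split.
  move=> g M1 M2 s1 s2 Hg A1 A2 E1 E2 I1 I2.
  rewrite -(induced_uniq (lift_induces Hg A1 E1) I1).
  exact: (induced_uniq (lift_induces Hg A2 E2) I2).
exists Theta; split.
  by move=> g M Hg A E; apply: lift_induces.
split.
  apply/injmP => g1 g2 H1 H2 E.
  have H12 : (g1 * g2^-1)%g \in SymX by rewrite groupM ?groupV.
  have T1 : Theta (g1 * g2^-1)%g = 1%g by rewrite morphM ?groupV // morphV // E mulgV.
  have := theta_ker (SymX_Aff H12) T1.
  by move/(congr1 (fun x => x * g2)%g); rewrite mulgKV mul1g.
split.
  by move=> g Hg; have [M [A _ _ I]] := SymX_Pl Hg; exists M.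
split.
  rewrite morphim_gen; last exact: gens_in.
  by rewrite !morphimU !morphim_set1 ?a1_in ?a2_in ?b_in.
split.
  move=> j; rewrite (Theta_gen a1_in (gf := a1f)) => [|x]; last by rewrite permE.
  by apply/eqP; move: j; apply: allIP; vm_compute.
split.
  move=> j; rewrite (Theta_gen a2_in (gf := a2f)) => [|x]; last by rewrite permE.
  by apply/eqP; move: j; apply: allIP; vm_compute.
move=> j; rewrite (Theta_gen b_in (gf := bf)) => [|x]; last by rewrite permE.
by apply/eqP; move: j; apply: allIP; vm_compute.
Qed.
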